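(* Let $k\ge 0$. If $V$ is a point configuration with $\mathrm{Th}(V)\le k$ and $H$ is a supporting hyperplane of $V$, then $\mathrm{Th}(V\cap H)\le k$. Likewise, if $\mathrm{Lev}(V)\le k$ then $\mathrm{Lev}(V\cap H)\le k$.
   Context: A point configuration is a finite set $V\subset\mathbb{R}^n$. A linear function means an affine function $\ell(x)=\delta-\langle c,x\rangle$. A supporting hyperplane of $V$ is a hyperplane $H=\{x:g(x)=0\}$ with $g$ a linear function nonnegative on $V$. A linear function $\ell$ nonnegative on $V$ is $k$-sos with respect to $V$ if there are polynomials $h_1,\dots,h_s$ with $\deg h_i\le k$ and $\ell(v)=\sum_i h_i(v)^2$ for all $v\in V$. The Theta rank $\mathrm{Th}(V)$ is the smallest $k\ge0$ such that every linear function nonnegative on $V$ is $k$-sos with respect to $V$. For $\ell$ nonnegative on $V$, $\{v\in V:\ell(v)=0\}$ is a face of $V$; inclusion-maximal faces different from $V$ are facets and the corresponding $\ell$ facet-defining. $V$ is $k$-level if every facet-defining linear function takes at most $k$ distinct values on $V$; the levelness $\mathrm{Lev}(V)$ is the smallest such $k$. *)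

(* Defs.v *)
From HB Require Import structures.
From mathcomp Require Import all_boot all_order all_algebra.
From mathcomp Require Import finmap.
From mathcomp Require Import reals.
From mathcomp Require Import mpoly.

Set Implicit Arguments.
Unset Strict Implicit.
Unset Printing Implicit Defensive.

Import Order.TTheory GRing.Theory Num.Theory.
Local Open Scope ring_scope.
Local Open Scope fset_scope.

Section PointConfigurations.
Variables (R : realType) (n : nat).

Definition lin_eval (c : 'rV[R]_n) (d : R) (x : 'rV[R]_n) : R :=
  d - \sum_(i < n) c 0 i * x 0 i.

Definition lin_nonneg (V : {fset 'rV[R]_n}) (c : 'rV[R]_n) (d : R) : Prop :=
  forall v, v \in V -> 0 <= lin_eval c d v.

Definition peval (h : {mpoly R[n]}) (x : 'rV[R]_n) : R := h.@[fun i => x 0 i].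

(* l is k-sos w.r.t. V: l(v) = sum_i h_i(v)^2 on V with deg h_i <= k
   (msize h = 1 + deg h, and msize 0 = 0). *)
Definition k_sos (k : nat) (V : {fset 'rV[R]_n}) (c : 'rV[R]_n) (d : R) : Prop :=
  exists hs : seq {mpoly R[n]},
    (forall h, h \in hs -> (msize h <= k.+1)%N) /\
    (forall v, v \in V -> lin_eval c d v = \sum_(h <- hs) (peval h v) ^+ 2).

Definition theta_prop (V : {fset 'rV[R]_n}) (k : nat) : Prop :=
  forall c d, lin_nonneg V c d -> k_sos k V c d.

Definition is_theta_rank (V : {fset 'rV[R]_n}) (t : nat) : Prop :=
  theta_prop V t /\ forall j, theta_prop V j -> (t <= j)%N.

Definition zero_set (V : {fset 'rV[R]_n}) (c : 'rV[R]_n) (d : R) : {fset 'rV[R]_n} :=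
  [fset v in V | lin_eval c d v == 0].

Definition is_face (V F : {fset 'rV[R]_n}) : Prop :=
  exists c d, lin_nonneg V c d /\ F = zero_set V c d.

Definition is_facet (V F : {fset 'rV[R]_n}) : Prop :=
  is_face V F /\ F != V /\
  forall G, is_face V G -> G != V -> F `<=` G -> G = F.

Definition facet_defining (V : {fset 'rV[R]_n}) (c : 'rV[R]_n) (d : R) : Prop :=
  lin_nonneg V c d /\ is_facet V (zero_set V c d).

Definition k_level (V : {fset 'rV[R]_n}) (k : nat) : Prop :=
  forall c d, facet_defining V c d ->
    (#|` [fset lin_eval c d v | v in V] | <= k)%N.

Definition is_levelness (V : {fset 'rV[R]_n}) (t : nat) : Prop :=
  k_level V t /\ forall j, k_level V j -> (t <= j)%N.

Definition supporting_hyperplane (V : {fset 'rV[R]_n}) (c : 'rV[R]_n) (d : R) : Prop :=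
  c != 0 /\ lin_nonneg V c d.

Definition cap_hyperplane (V : {fset 'rV[R]_n}) (c : 'rV[R]_n) (d : R) : {fset 'rV[R]_n} :=
  [fset v in V | lin_eval c d v == 0].

End PointConfigurations.

(* Main.v *)
Require Import Defs.
From HB Require Import structures.
From mathcomp Require Import all_boot all_order all_algebra.
From mathcomp Require Import finmap.
From mathcomp Require Import reals.
From mathcomp Require Import mpoly.
From mathcomp Require Import ring lra zify.
From Stdlib Require Import Classical.
Import Order.TTheory GRing.Theory Num.Theory.
Local Open Scope ring_scope.
Local Open Scope fset_scope.

Section Aux.
Local Open Scope ring_scope.
Variables (R : realType) (n : nat).

Lemma zsP (V : {fset 'rV[R]_n}) c d v :
  (v \in zero_set V c d) = (v \in V) && (lin_eval c d v == 0).
Proof. by rewrite !inE. Qed.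

Lemma lin_comb (c1 c2 : 'rV[R]_n) d1 d2 a b v :
  lin_eval (a *: c1 + b *: c2) (a * d1 + b * d2) v
  = a * lin_eval c1 d1 v + b * lin_eval c2 d2 v.
Proof.
rewrite /lin_eval.
under eq_bigr => i _ do rewrite !mxE mulrDl -!mulrA.
rewrite big_split /= -!mulr_sumr; ring.
Qed.

Lemma lin_combE (c1 c2 : 'rV[R]_n) d1 d2 s v :
  lin_eval (1 *: c1 + (- s) *: c2) (1 * d1 + (- s) * d2) v
  = lin_eval c1 d1 v - s * lin_eval c2 d2 v.
Proof. by rewrite lin_comb mul1r mulNr. Qed.

Lemma argmin (T : eqType) (f : T -> R) (s : seq T) :
  s != [::] -> exists2 x, x \in s & forall y, y \in s -> f x <= f y.
Proof.
elim: s => [//|a s IH] _.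
case: (eqVneq s [::]) => [->|sne].
  by exists a; rewrite ?mem_seq1 // => y; rewrite mem_seq1 => /eqP ->.
have [x xs Hx] := IH sne.
case: (lerP (f a) (f x)) => [ax|xa].
  exists a; first by rewrite mem_head.
  move=> y; rewrite in_cons => /orP[/eqP ->//|ys].
  exact: le_trans ax (Hx y ys).
exists x; first by rewrite in_cons xs orbT.
move=> y; rewrite in_cons => /orP[/eqP ->|ys]; [exact: ltW|exact: Hx].
Qed.

Lemma big_lambda (V : {fset 'rV[R]_n}) cg dg cl dl :
  lin_nonneg V cg dg -> exists lam : R, forall v, v \in V ->
    lin_eval cg dg v != 0 -> 0 < lin_eval cl dl v + lam * lin_eval cg dg v.
Proof.
move=> nn.
case: (eqVneq (V : seq 'rV[R]_n) [::]) => [V0|Vne].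
  by exists 0 => v vV; have : v \in (V : seq 'rV[R]_n) := vV; rewrite V0.
have [x0 x0V Hx0] := @argmin _ (fun v => - (- lin_eval cl dl v / lin_eval cg dg v)) _ Vne.
exists (- lin_eval cl dl x0 / lin_eval cg dg x0 + 1) => v vV gv.
have gp : 0 < lin_eval cg dg v by rewrite lt0r gv nn.
have := Hx0 v vV; rewrite lerN2 => H.
have H2 : (- lin_eval cl dl v / lin_eval cg dg v + 1) * lin_eval cg dg v <=
   (- lin_eval cl dl x0 / lin_eval cg dg x0 + 1) * lin_eval cg dg v.
  by apply: ler_wpM2r; [exact: ltW | rewrite lerD2r].
rewrite mulrDl divfK // mul1r in H2.
lra.
Qed.

Lemma zs_neq (V : {fset 'rV[R]_n}) c d :
  zero_set V c d != V -> exists2 v, v \in V & lin_eval c d v != 0.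
Proof.
move=> ne; apply: NNPP => H; move/eqP: ne; apply; apply/fsetP => x.
rewrite zsP; case xV: (x \in V) => //=; apply/eqP; apply: NNPP => hx.
by apply: H; exists x => //; apply/eqP.
Qed.

Lemma ex_min_nat (P : nat -> Prop) t : P t ->
  exists t', P t' /\ (forall j, P j -> (t' <= j)%N) /\ (t' <= t)%N.
Proof.
elim/ltn_ind: t => t IH Pt.
case: (classic (exists j, (j < t)%N /\ P j)) => [[j [jt Pj]]|nj].
  have [t' [Pt' [mn le]]] := IH j jt Pj.
  by exists t'; split => //; split => //; exact: leq_trans le (ltnW jt).
exists t; split => //; split => // j Pj.
by rewrite leqNgt; apply/negP => jt; apply: nj; exists j.
Qed.

Lemma arith (a b c N : nat) : (a - b < N.+1)%N -> (b < c)%N -> (c <= a)%N -> (a - c < N)%N.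
Proof. lia. Qed.

Lemma theta_cap (V : {fset 'rV[R]_n}) c d t :
  lin_nonneg V c d -> theta_prop V t -> theta_prop (zero_set V c d) t.
Proof.
move=> nnV th c' d' nnW.
have [lam Hlam] := @big_lambda V c d c' d' nnV.
have nn2 : lin_nonneg V (1 *: c' + lam *: c) (1 * d' + lam * d).
  move=> v vV; rewrite lin_comb mul1r.
  case: (eqVneq (lin_eval c d v) 0) => [g0|g0].
    by rewrite g0 mulr0 addr0; apply: nnW; rewrite zsP vV g0 eqxx.
  exact: ltW (Hlam v vV g0).
have [hs [Hdeg Hsum]] := th _ _ nn2.
exists hs; split => // v; rewrite zsP => /andP[vV /eqP g0].
by rewrite -Hsum // lin_comb g0 mulr0 addr0 mul1r.
Qed.

Lemma level_cap (V : {fset 'rV[R]_n}) c d t :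
  lin_nonneg V c d -> k_level V t -> k_level (zero_set V c d) t.
Proof.
move=> nnV klV c' d' [nnW [[_ [_ _]] [neqF maxF]]].
set W := zero_set V c d.
have WsubV : forall w, w \in W -> w \in V by move=> w; rewrite zsP => /andP[].
have [w0 w0W lw0] : exists2 w0, w0 \in W & lin_eval c' d' w0 != 0.
  exact: zs_neq.
pose Good cm dm := lin_nonneg V cm dm /\ forall w, w \in W ->
   (lin_eval cm dm w == 0) = (lin_eval c' d' w == 0).
have ext : forall N cm dm, (#|`V| - #|`zero_set V cm dm| < N)%N -> Good cm dm ->
    exists c2 d2, facet_defining V c2 d2 /\ Good c2 d2.
  elim => [//|N IH] cm dm HN [nnm agm].
  have GneV : zero_set V cm dm != V.
    apply/eqP => E.
    have : w0 \in zero_set V cm dm by rewrite E; exact: WsubV.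
    by rewrite zsP => /andP[_]; rewrite agm // (negbTE lw0).
  have GsubV : forall c2 d2, (#|`zero_set V c2 d2| <= #|`V|)%N.
    by move=> c2 d2; apply: fsubset_leq_card; apply/fsubsetP => x; rewrite zsP => /andP[].
  case: (classic (forall G, is_face V G -> G != V -> zero_set V cm dm `<=` G ->
                    G = zero_set V cm dm)) => [Hmax|Hnmax].
    exists cm, dm; split; last by [].
    split => //; split; first by exists cm, dm.
    by split.
  have [G2 HG2] := not_all_ex_not _ _ Hnmax.
  have [face2 HG2'] := imply_to_and _ _ HG2.
  have [neq2 HG2''] := imply_to_and _ _ HG2'.
  have [sub2 ne2] := imply_to_and _ _ HG2''.
  move: face2 neq2 sub2 ne2 => [c2 [d2 [nn2 ->]]] neq2 sub2 ne2.
  have ltc : (#|`zero_set V cm dm| < #|`zero_set V c2 d2|)%N.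
    apply: fproper_ltn_card; rewrite fproperEneq sub2 andbT.
    by apply/eqP => E; apply: ne2; rewrite E.
  have le2 := GsubV c2 d2.
  case: (classic (forall w, w \in W ->
     (lin_eval c2 d2 w == 0) = (lin_eval c' d' w == 0))) => [ag2|nag2].
    by apply: (IH c2 d2) => //; exact: arith HN ltc le2.
  have Wz : forall w, w \in W -> lin_eval c2 d2 w = 0.
    have face2W : is_face W (zero_set W c2 d2).
      by exists c2, d2; split => // w wW; apply: nn2; exact: WsubV.
    case: (eqVneq (zero_set W c2 d2) W) => [EW|NW].
      move=> w wW; have : w \in zero_set W c2 d2 by rewrite EW.
      by rewrite zsP => /andP[_ /eqP].
    exfalso.
    have sub : zero_set W c' d' `<=` zero_set W c2 d2.
      apply/fsubsetP => x; rewrite !(zsP W) => /andP[xW lx]; rewrite xW /=.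
      have : x \in zero_set V cm dm by rewrite zsP (WsubV _ xW) /= agm.
      by move/(fsubsetP sub2); rewrite zsP => /andP[].
    have E := maxF _ face2W NW sub.
    apply: nag2 => w wW.
    have := congr1 (fun S => w \in S) E; rewrite /= !(zsP W) wW /=.
    done.
  have [v1 v1V v1nz] := @zs_neq V c2 d2 neq2.
  pose S := [seq v <- V | lin_eval c2 d2 v != 0].
  have Sne : S != [::].
    have : v1 \in S by rewrite mem_filter v1nz v1V.
    by move=> H; apply/eqP => E; rewrite E in H.
  have [v0 v0S Hv0] := @argmin _ (fun v => lin_eval cm dm v / lin_eval c2 d2 v) _ Sne.
  move: v0S; rewrite mem_filter => /andP[v0nz v0V].
  set s := lin_eval cm dm v0 / lin_eval c2 d2 v0.
  have rE := lin_combE cm c2 dm d2 s.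
  have subr : zero_set V cm dm `<=` zero_set V (1 *: cm + (- s) *: c2) (1 * dm + (- s) * d2).
    apply/fsubsetP => x xG; have := fsubsetP sub2 x xG.
    move: xG; rewrite !zsP rE => /andP[xV /eqP mx] /andP[_ /eqP m2x].
    by rewrite xV mx m2x mulr0 subr0 eqxx.
  have v0r : v0 \in zero_set V (1 *: cm + (- s) *: c2) (1 * dm + (- s) * d2).
    by rewrite zsP v0V rE /s divfK // subrr eqxx.
  have v0G : v0 \notin zero_set V cm dm.
    apply/negP => /(fsubsetP sub2); rewrite zsP => /andP[_].
    by rewrite (negbTE v0nz).
  have ltr : (#|`zero_set V cm dm| <
     #|`zero_set V (1 *: cm + (- s) *: c2) (1 * dm + (- s) * d2)|)%N.
    apply: fproper_ltn_card; rewrite fproperEneq subr andbT.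
    by apply/eqP => E; move: v0G; rewrite E v0r.
  have ler := GsubV (1 *: cm + (- s) *: c2) (1 * dm + (- s) * d2).
  apply: (IH (1 *: cm + (- s) *: c2) (1 * dm + (- s) * d2)); first exact: arith HN ltr ler.
  split.
    move=> v vV; rewrite rE.
    case: (eqVneq (lin_eval c2 d2 v) 0) => [->|nz].
      by rewrite mulr0 subr0 nnm.
    have gp : 0 < lin_eval c2 d2 v by rewrite lt0r nz nn2.
    have := Hv0 v; rewrite mem_filter nz vV => /(_ isT).
    rewrite -/s ler_pdivlMr // => H; rewrite subr_ge0; exact: H.
  by move=> w wW; rewrite rE Wz // mulr0 subr0 agm.
have [lam Hlam] := @big_lambda V c d c' d' nnV.
have good0 : Good (1 *: c' + lam *: c) (1 * d' + lam * d).
  split.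
    move=> v vV; rewrite lin_comb mul1r.
    case: (eqVneq (lin_eval c d v) 0) => [g0|g0].
      by rewrite g0 mulr0 addr0; apply: nnW; rewrite zsP vV g0 eqxx.
    exact: ltW (Hlam v vV g0).
  move=> w; rewrite zsP => /andP[_ /eqP g0].
  by rewrite lin_comb g0 mulr0 addr0 mul1r.
have [c2 [d2 [fd2 [nn2 ag2]]]] := ext _ _ _ (ltnSn _) good0.
have [s [sp Hs]] : exists s, 0 < s /\ forall w, w \in W ->
    lin_eval c2 d2 w = s * lin_eval c' d' w.
  pose S := [seq w <- W | lin_eval c' d' w != 0].
  have Sne : S != [::].
    have : w0 \in S by rewrite mem_filter lw0 w0W.
    by move=> H; apply/eqP => E; rewrite E in H.
  have [w1 w1S Hw1] := @argmin _ (fun w => lin_eval c2 d2 w / lin_eval c' d' w) _ Sne.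
  move: w1S; rewrite mem_filter => /andP[w1nz w1W].
  set s := lin_eval c2 d2 w1 / lin_eval c' d' w1.
  have lp : 0 < lin_eval c' d' w1 by rewrite lt0r w1nz nnW.
  have mp : 0 < lin_eval c2 d2 w1.
    by rewrite lt0r ag2 // w1nz nn2 // WsubV.
  exists s; split; first exact: divr_gt0.
  have hE := lin_combE c2 c' d2 d' s.
  have faceh : is_face W (zero_set W (1 *: c2 + (- s) *: c') (1 * d2 + (- s) * d')).
    exists (1 *: c2 + (- s) *: c'), (1 * d2 + (- s) * d'); split => //.
    move=> v vW; rewrite hE.
    case: (eqVneq (lin_eval c' d' v) 0) => [l0|nz].
      have : lin_eval c2 d2 v == 0 by rewrite ag2 // l0.
      by move/eqP ->; rewrite l0 mulr0 subr0.
    have gp : 0 < lin_eval c' d' v by rewrite lt0r nz nnW.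
    have := Hw1 v; rewrite mem_filter nz vW => /(_ isT).
    rewrite -/s ler_pdivlMr // => H; rewrite subr_ge0; exact: H.
  have subh : zero_set W c' d' `<=` zero_set W (1 *: c2 + (- s) *: c') (1 * d2 + (- s) * d').
    apply/fsubsetP => x; rewrite !(zsP W) hE => /andP[xW /eqP lx]; rewrite xW /=.
    have : lin_eval c2 d2 x == 0 by rewrite ag2 // lx.
    by move/eqP ->; rewrite lx mulr0 subr0.
  case: (eqVneq (zero_set W (1 *: c2 + (- s) *: c') (1 * d2 + (- s) * d')) W) => [EW|NW].
    move=> w wW.
    have : w \in zero_set W (1 *: c2 + (- s) *: c') (1 * d2 + (- s) * d') by rewrite EW.
    by rewrite zsP hE subr_eq0 => /andP[_ /eqP].
  exfalso.
  have E := maxF _ faceh NW subh.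
  have : w1 \in zero_set W (1 *: c2 + (- s) *: c') (1 * d2 + (- s) * d').
    by rewrite zsP w1W hE /s divfK // subrr eqxx.
  by rewrite E zsP (negbTE w1nz) andbF.
apply: leq_trans (klV _ _ fd2).
have s0 : s != 0 by rewrite gt_eqF.
set L := [fset lin_eval c' d' v | v in W].
have cardL : #|` [fset s * x | x in L]| = #|` L|.
  by rewrite card_imfset //; exact: mulfI.
rewrite -cardL.
apply: fsubset_leq_card; apply/fsubsetP => y /imfsetP [x /= xL ->].
move: xL => /imfsetP [w /= wW ->].
rewrite -Hs //; apply/imfsetP; exists w => //=; exact: WsubV.
Qed.

End Aux.

Theorem lemma2p3 (R : realType) (n k : nat) (V : {fset 'rV[R]_n})
  (c : 'rV[R]_n) (d : R) :
  supporting_hyperplane V c d ->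
  ((exists t, is_theta_rank V t /\ (t <= k)%N) ->
    exists t', is_theta_rank (cap_hyperplane V c d) t' /\ (t' <= k)%N) /\
  ((exists t, is_levelness V t /\ (t <= k)%N) ->
    exists t', is_levelness (cap_hyperplane V c d) t' /\ (t' <= k)%N).
Proof.
move=> [_ nnV].
have -> : cap_hyperplane V c d = zero_set V c d by [].
split.
  move=> [t [[th _] tk]].
  have [t' [P1 [P2 P3]]] := @ex_min_nat _ _ (@theta_cap R n V c d t nnV th).
  by exists t'; split; [split|exact: leq_trans P3 tk].
move=> [t [[kl _] tk]].
have [t' [P1 [P2 P3]]] := @ex_min_nat _ _ (@level_cap R n V c d t nnV kl).
by exists t'; split; [split|exact: leq_trans P3 tk].
Qed.
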